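(* Fix $M\in\mathbb{R}$. For all $m\le M$, all probability distributions $\nu\in\mathcal{D}_{m,M}$ and all $\mu>\mathbb{E}(\nu)$, \[ \mathcal{K}_{\inf}(\nu,\mu,\mathcal{D}_{m,M})=\mathcal{K}_{\inf}(\nu,\mu,\mathcal{D}_{-\infty,M}). \]
   Context: $\mathcal{D}_{m,M}$ is the set of probability distributions on $\mathbb{R}$ supported on $[m,M]$; $\mathcal{D}_{-\infty,M}$ is the set of probability distributions with a first moment supported on $(-\infty,M]$. $\mathbb{E}(\nu)$ denotes the mean of $\nu$. For a distribution $\nu$, $x\in\mathbb{R}$ and a set of distributions $\mathcal{D}$, $\mathcal{K}_{\inf}(\nu,x,\mathcal{D})=\inf\{\mathrm{KL}(\nu,\nu'):\nu'\in\mathcal{D},\ \mathbb{E}(\nu')>x\}$, with the infimum of the empty set equal to $+\infty$; $\mathrm{KL}(\nu,\nu')=\int\ln(d\nu/d\nu')\,d\nu$ if $\nu\ll\nu'$ and $+\infty$ otherwise. *)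

(* Defs.v *)
From HB Require Import structures.
From mathcomp Require Import all_boot all_order all_algebra.
From mathcomp Require Import all_classical all_reals all_analysis.
Set Implicit Arguments. Unset Strict Implicit. Unset Printing Implicit Defensive.
Import Order.TTheory GRing.Theory Num.Theory.
Local Open Scope classical_set_scope.
Local Open Scope ring_scope.
Local Open Scope ereal_scope.

Definition is_density (R : realType) (nu nu' : probability R R) (f : R -> R) :=
  [/\ measurable_fun setT f, (forall x, (0 <= f x)%R) &
      forall A, measurable A -> nu A = \int[nu']_(x in A) (f x)%:E].

(* KL(nu, nu') = \int ln (dnu/dnu') dnu if nu << nu' (i.e. a density exists),
   and +oo otherwise (inf of the empty set).  All densities agree nu'-a.e.,
   so the set below is a singleton when nonempty. *)
Definition KL (R : realType) (nu nu' : probability R R) : \bar R :=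
  ereal_inf [set \int[nu]_x (ln (f x))%:E | f in is_density nu nu'].

Definition mean (R : realType) (nu : probability R R) : \bar R :=
  \int[nu]_x x%:E.

Definition D_mM (R : realType) (m M : R) : set (probability R R) :=
  [set nu | nu `[m, M]%classic = 1].

Definition D_infM (R : realType) (M : R) : set (probability R R) :=
  [set nu | nu `]-oo, M]%classic = 1 /\ nu.-integrable setT (fun x => x%:E)].

Definition Kinf (R : realType) (nu : probability R R) (x : R)
  (D : set (probability R R)) : \bar R :=
  ereal_inf [set KL nu nu' | nu' in [set nu' | D nu' /\ x%:E < mean nu']].

(* Main.v *)
Require Import Defs.
From HB Require Import structures.
From mathcomp Require Import all_boot all_order all_algebra.
From mathcomp Require Import all_classical all_reals all_analysis.
From mathcomp Require Import measurable_realfun.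
From mathcomp Require Import ring lra.
Import Order.TTheory GRing.Theory Num.Theory.
Local Open Scope classical_set_scope.
Local Open Scope ring_scope.
Local Open Scope ereal_scope.

Definition Tm (R : realType) (m : R) (x : R) : R := Num.max x m.
Arguments Tm {R}.
Lemma Tm_mfun (R : realType) (m : R) : measurable_fun setT (Tm m).
Proof. by rewrite /Tm; apply: measurable_maxr. Qed.
HB.instance Definition _ (R : realType) (m : R) :=
  isMeasurableFun.Build _ _ R R (Tm m) (@Tm_mfun R m).

Lemma prob_compl0 (R : realType) (P : probability R R) (S : set R) :
  measurable S -> P S = 1 -> P (~` S) = 0.
Proof. by move=> mS PS; rewrite probability_setC // PS subee. Qed.

Lemma le_integral_gen (R : realType) (mu : {measure set R -> \bar R}) (f1 f2 : R -> \bar R) :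
  measurable_fun setT f1 -> measurable_fun setT f2 -> (forall x, f1 x <= f2 x) ->
  \int[mu]_x f1 x <= \int[mu]_x f2 x.
Proof.
move=> m1 m2 le12; rewrite integralE [leRHS]integralE; apply: leeB.
  apply: ge0_le_integral => //.
  - exact: measurable_funepos.
  - exact: measurable_funepos.
  - by move=> x _; apply: (@funepos_le _ _ setT) => //; rewrite ?inE // => y _; exact: le12.
apply: ge0_le_integral => //.
- exact: measurable_funeneg.
- exact: measurable_funeneg.
- by move=> x _; apply: (@funeneg_le _ _ setT) => //; rewrite ?inE // => y _; exact: le12.
Qed.

Lemma Dsub (R : realType) (m M : R) (P : probability R R) :
  D_mM m M P -> D_infM M P.
Proof.
rewrite /D_mM /D_infM /= => H; split.
  apply/eqP; rewrite eq_le probability_le1 //=; rewrite -H; apply: le_measure.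
  - by rewrite inE; exact: measurable_itv.
  - by rewrite inE; exact: measurable_itv.
  - by move=> x; rewrite /= !in_itv /= => /andP[_ ->].
apply/integrableP; split; first exact/measurable_EFinP.
apply: (@le_lt_trans _ _ (\int[P]_x (cst (`|m| + `|M|)%R%:E) x)).
  apply: ae_ge0_le_integral => //.
  - by apply: measurableT_comp; [exact: abse_measurable | exact/measurable_EFinP].
  - by move=> x _; rewrite lee_fin addr_ge0.
  - exists (~` `[m, M]%classic); split.
    + by apply: measurableC; exact: measurable_itv.
    + by apply: prob_compl0 => //; exact: measurable_itv.
    + move=> x /= Hx y; apply: Hx => _; rewrite lee_fin.
      move: y; rewrite /= in_itv /= => /andP[mx xM].
      have h1 : (- m <= `|m|)%R by rewrite ler_normr lexx orbT.
      have h2 : (M <= `|M|)%R by rewrite ler_normr lexx.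
      have h3 := normr_ge0 m; have h4 := normr_ge0 M.
      rewrite ler_norml; apply/andP; split; lra.
rewrite integral_cst //.
apply: lte_mul_pinfty => //.
by apply: (le_lt_trans (probability_le1 _ _)) => //; exact: ltry.
Qed.


Lemma keyD (R : realType) (m M : R) (mM : (m <= M)%R)
  (nu' : probability R R) (hnu' : D_infM M nu') :
  D_mM m M (distribution nu' (Tm m)).
Proof.
rewrite /D_mM /= /distribution /pushforward.
have -> : Tm m @^-1` `[m, M]%classic = `]-oo, M]%classic.
  apply/seteqP; split => x; rewrite /= !in_itv /= /Tm.
    by move=> /andP[_]; rewrite ge_max => /andP[].
  by move=> xM; rewrite le_max lexx orbT /= ge_max xM mM.
by case: hnu'.
Qed.

Lemma keyM (R : realType) (m M : R)
  (nu' : probability R R) (hnu' : D_infM M nu') (mu : R)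
  (hmean : mu%:E < mean nu') :
  mu%:E < mean (distribution nu' (Tm m)).
Proof.
have intT : nu'.-integrable setT (EFin \o Tm m).
  apply: (@le_integrable _ _ _ nu' setT measurableT _ ((fun x => `|x%:E|) \+ (EFin \o cst `|m|%R))) => //.
  - by apply/measurable_EFinP; exact: Tm_mfun.
  - move=> x _ /=; rewrite lee_fin /Tm.
    rewrite [X in (_ <= X)%R]ger0_norm; last exact: addr_ge0 (normr_ge0 x) (normr_ge0 m).
    have h1 : (x <= `|x|)%R by rewrite ler_normr lexx.
    have h2 : (m <= `|m|)%R by rewrite ler_normr lexx.
    have h1' : (- x <= `|x|)%R by rewrite ler_normr lexx orbT.
    have h2' : (- m <= `|m|)%R by rewrite ler_normr lexx orbT.
    rewrite ler_norml; apply/andP; split.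
    + rewrite le_max; apply/orP; left; lra.
    + rewrite ge_max; apply/andP; split; lra.
  - apply: integrableD => //; first exact: integrable_abse (proj2 hnu').
    exact: finite_measure_integrable_cst.
rewrite /mean integral_distribution //.
apply: (lt_le_trans hmean); apply: le_integral => //; first exact: (proj2 hnu').
by move=> x _; rewrite lee_fin /Tm le_max lexx.
Qed.

Lemma keyK (R : realType) (m M : R) (nu nu' : probability R R)
  (hnu : D_mM m M nu) : KL nu (distribution nu' (Tm m)) <= KL nu nu'.
Proof.
apply: le_ereal_inf_tmp => _ [f [mf f0 fd] <-].
have mIc : measurable `]-oo, m]%classic by exact: measurable_itv.
have mIo : measurable `]-oo, m[%classic by exact: measurable_itv.
have mIr : measurable `]m, +oo[%classic by exact: measurable_itv.
have mS1 : measurable [set m] by exact: measurable_set1.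
have F1 : nu `]-oo, m[%classic = 0.
  apply/eqP; rewrite eq_le measure_ge0 andbT.
  rewrite -(@prob_compl0 R nu _ _ hnu); last exact: measurable_itv.
  apply: le_measure; rewrite ?inE //; first by apply: measurableC; exact: measurable_itv.
  by move=> x; rewrite /= !in_itv /= => xm /andP[/(lt_le_trans xm)]; rewrite ltxx.
have F2 : nu [set m] = (f m)%:E * nu' [set m].
  rewrite fd // -integral_cst //; apply: eq_integral => x; rewrite inE => -> //.
have F3 : nu' [set m] <= nu' `]-oo, m]%classic.
  by apply: le_measure; rewrite ?inE // => x ->; rewrite /= in_itv /= lexx.
pose p := fine (nu' `]-oo, m]%classic).
pose q := fine (nu [set m]).
pose c := (q / p)%R.
have es : nu' [set m] = (fine (nu' [set m]))%:E by rewrite fineK // fin_num_measure.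
have ep : nu' `]-oo, m]%classic = p%:E by rewrite fineK // fin_num_measure.
 pose g := fun x => if x == m then c else f x.
have c0 : (0 <= c)%R by rewrite divr_ge0 // fine_ge0.
have mg : measurable_fun setT g.
  apply: measurable_fun_ifT => //.
  by apply: measurable_fun_eqr => //.
have g0 : forall x, (0 <= g x)%R by move=> x; rewrite /g; case: ifP.
have gd : is_density nu (distribution nu' (Tm m)) g.
  split => // A mA.
  rewrite /distribution ge0_integral_pushforward //; last first.
    - by move=> x _; rewrite lee_fin.
    - by apply/measurable_EFinP; exact: measurable_funTS.
  have hT1 x : `]m, +oo[%classic x -> Tm m x = x.
    by rewrite /= in_itv /= andbT /Tm => /ltW mx; rewrite max_l.
  have hT2 x : `]-oo, m]%classic x -> Tm m x = m.
    by rewrite /= in_itv /= /Tm => xm; rewrite max_r.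
  have I1 : \int[nu']_(x in A `&` `]m, +oo[%classic) ((fun y => (g y)%:E) \o Tm m) x
      = nu (A `&` `]m, +oo[%classic).
    rewrite fd; last exact: measurableI.
    apply: eq_integral => x; rewrite inE => -[_ xr] /=; rewrite hT1 // /g.
    case: ifP => // /eqP xm; move: xr; rewrite xm /= in_itv /= ltxx //.
  have N1 : nu A = nu (A `&` `]m, +oo[%classic) + nu (A `&` `]-oo, m]%classic).
    rewrite -measureU; try exact: measurableI.
      congr (nu _); apply/seteqP; split => x /=.
        move=> Ax; rewrite !in_itv /= andbT.
        by case: (ltP m x) => hx; [left|right].
      by case=> -[].
    apply/seteqP; split => x //= [[_]]; rewrite !in_itv /= andbT => mx [_ xm].
    by move: (lt_le_trans mx xm); rewrite ltxx.
  rewrite N1; have [Am|Am] := pselect (A m).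
    have -> : Tm m @^-1` A = (A `&` `]m, +oo[%classic) `|` `]-oo, m]%classic.
      apply/seteqP; split => x /=.
        rewrite !in_itv /= andbT; case: (ltP m x) => hx.
          by rewrite /Tm max_l ?(ltW hx) // => Ax; left.
        by move=> _; right.
      case=> [[Ax xr]|xr]; first by rewrite hT1.
      by rewrite hT2.
    rewrite ge0_integral_setU //; first last.
    - apply/disj_setPS => x [[_]]; rewrite /= !in_itv /= andbT => mx xm.
      by move: (lt_le_trans mx xm); rewrite ltxx.
    - by move=> x _; rewrite lee_fin.
    - apply/measurable_EFinP; apply: measurableT_comp => //.
      exact: measurable_funTS (@Tm_mfun R m).
    - exact: measurableI.
    rewrite I1; congr (_ + _).
    have -> : \int[nu']_(x in `]-oo, m]%classic) ((fun y => (g y)%:E) \o Tm m) x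
        = \int[nu']_(x in `]-oo, m]%classic) (cst c%:E) x.
      apply: eq_integral => x; rewrite inE => xm /=; rewrite hT2 // /g eqxx //.
    rewrite integral_cst //; set pp := (X in _ = _ * X).
    have -> : pp = p%:E by exact: ep.
    have -> : A `&` `]-oo, m]%classic = [set m] `|` (A `&` `]-oo, m[%classic).
      apply/seteqP; split => x /=.
        rewrite !in_itv /= => -[Ax]; rewrite le_eqVlt => /orP[/eqP ->|xm]; first by left.
        by right.
      case=> [->|[Ax]]; first by rewrite in_itv /= lexx.
      by rewrite !in_itv /= => /ltW.
    rewrite measureU //; last first.
    - apply/seteqP; split => x //= [->] [_]; rewrite in_itv /= ltxx //.
    - exact: measurableI.
    rewrite [X in _ + X = _](_ : _ = 0); last first.
      apply/eqP; rewrite eq_le measure_ge0 andbT -F1; apply: le_measure;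
        rewrite ?inE //; first exact: measurableI.
    rewrite adde0.
    have [p0|p0] := eqVneq p 0%R.
      rewrite p0 -EFinM mulr0; transitivity ((f m)%:E * nu' [set m]); first exact: F2.
      have -> : nu' [set m] = 0.
        apply/eqP; rewrite eq_le measure_ge0 andbT; apply: (le_trans F3).
        by rewrite ep p0.
      by rewrite mule0.
    rewrite -EFinM /c divfK // /q fineK // fin_num_measure //.
  have -> : Tm m @^-1` A = A `&` `]m, +oo[%classic.
    apply/seteqP; split => x /=.
      rewrite !in_itv /= andbT; case: (ltP m x) => hx.
        by rewrite /Tm max_l ?(ltW hx).
      by rewrite /Tm max_r.
    by case=> Ax xr; rewrite hT1.
  rewrite I1 [X in _ + X = _](_ : _ = 0) ?adde0 //.
  apply/eqP; rewrite eq_le measure_ge0 andbT -F1; apply: le_measure;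
    rewrite ?inE //; first exact: measurableI.
  move=> x [Ax]; rewrite /= !in_itv /= le_eqVlt => /orP[/eqP xm|//].
  by move: Ax; rewrite xm.
apply: le_trans (ereal_inf_lbound _) _; first by exists g.
have mlg : measurable_fun setT (fun x => (ln (g x))%:E).
  by apply/measurable_EFinP; apply: measurableT_comp => //; exact: measurable_ln.
have mlf : measurable_fun setT (fun x => (ln (f x))%:E).
  by apply/measurable_EFinP; apply: measurableT_comp => //; exact: measurable_ln.
have [q0|q0] := eqVneq (nu [set m]) 0.
  rewrite (ae_eq_integral (fun x => (ln (f x))%:E)) //.
  exists [set m]; split => // x /= hx; apply/eqP/negPn/negP => xm; apply: hx => _.
  by rewrite /g (negbTE xm).
apply: le_integral_gen => // x; rewrite /g lee_fin; case: ifP => [/eqP ->|_] //.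
set s := fine (nu' [set m]).
have s0 : (0 <= s)%R by rewrite fine_ge0.
have hq : q = (f m * s)%R by rewrite /q F2 es.
have fs0 : (0 < f m * s)%R.
  rewrite lt_def mulr_ge0 // andbT -hq; apply: contra q0 => /eqP q0'.
  by rewrite -[nu [set m]]fineK ?fin_num_measure // -/q q0'.
have fm0 : (0 < f m)%R.
  by rewrite lt_def f0 andbT; apply: contraTneq fs0 => ->; rewrite mul0r ltxx.
have sp : (s <= p)%R by rewrite -lee_fin -es -ep.
have sgt0 : (0 < s)%R.
  by rewrite lt_def s0 andbT; apply: contraTneq fs0 => ->; rewrite mulr0 ltxx.
have pgt0 : (0 < p)%R by exact: lt_le_trans sp.
have cpos : (0 < c)%R by rewrite divr_gt0 // hq.
rewrite ler_ln ?posrE //.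
rewrite /c hq ler_pdivrMr // ler_wpM2l //; exact: ltW.
Qed.

Lemma key (R : realType) (m M : R) (mM : (m <= M)%R) (nu : probability R R)
  (hnu : D_mM m M nu) (nu' : probability R R) (hnu' : D_infM M nu') (mu : R)
  (hmean : mu%:E < mean nu') :
  [/\ D_mM m M (distribution nu' (Tm m)), mu%:E < mean (distribution nu' (Tm m))
    & KL nu (distribution nu' (Tm m)) <= KL nu nu'].
Proof.
split; first exact: keyD.
- exact: (@keyM R m M nu' hnu' mu hmean).
- exact: (@keyK R m M nu nu' hnu).
Qed.

Theorem proposition1 (R : realType) (M : R) :
  forall (m : R), (m <= M)%R ->
  forall (nu : probability R R), D_mM m M nu ->
  forall (mu : R), mean nu < mu%:E ->
  Kinf nu mu (D_mM m M) = Kinf nu mu (D_infM M).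
Proof.
move=> m mM nu hnu mu _.
apply/eqP; rewrite eq_le; apply/andP; split.
- apply: le_ereal_inf_tmp => _ [nu' [Dnu' mnu'] <-].
  have [h1 h2 h3] := @key R m M mM nu hnu nu' Dnu' mu mnu'.
  apply: le_trans h3; apply: ereal_inf_lbound.
  by exists (distribution nu' (Tm m)).
- apply: ereal_inf_le_tmp => _ [nu' [Dnu' mnu'] <-]; exists nu' => //.
  by split => //; exact: (@Dsub R m M nu').
Qed.
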